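(* Let $\mathcal C\subseteq(S^2)^n$ be a vector trifferent code equipped with a fixed total order $<$. For $x,y,a,b\in\mathcal C$ with $x<y$ and $a<b$, \[ P_{x,y}(E_{a,b})=\begin{cases}\{0\}, & (a,b)\ne(x,y),\\ E_{a,b}, & (a,b)=(x,y).\end{cases} \] Consequently the sum $\sum_{x<y} E_{x,y}$ of subspaces of $(\mathbb R^3)^{\otimes n}$, over all pairs $x<y$ in $\mathcal C$, is a direct sum.
   Context: A vector trifferent code of block length $n$ is a subset $\mathcal C\subseteq(S^2)^n$ ($S^2$ the unit sphere in $\mathbb R^3$) such that for any three distinct $x,y,z\in\mathcal C$ there is $i\in[n]$ with $x_i,y_i,z_i$ mutually orthogonal. For nonzero $u,v\in\mathbb R^3$ define the subspace $f(u,v)=u^\perp\cap v^\perp$ if $u\perp v$, and $f(u,v)=u^\perp$ otherwise, where $u^\perp$ is the orthogonal complement of $u$ in $\mathbb R^3$. For $x,y\in\mathcal C$ define $E_{x,y}=\bigotimes_{i=1}^n f(x_i,y_i)\subseteq(\mathbb R^3)^{\otimes n}$ and $P_{x,y}=\bigotimes_{i=1}^n P_{f(x_i,y_i)}$, where $P_S$ denotes the orthogonal projection of $\mathbb R^3$ onto the subspace $S$. *)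

(* Defs.v *)
From HB Require Import structures.
From mathcomp Require Import all_boot all_order all_algebra.
From mathcomp Require Import finmap.
From mathcomp Require Import mxtens.
Set Implicit Arguments. Unset Strict Implicit. Unset Printing Implicit Defensive.
Import Order.TTheory GRing.Theory Num.Theory.
Local Open Scope ring_scope.

(* Vectors of R^3 are row vectors 'rV[R]_3; a subspace S of R^m is
   represented (mxalgebra style) by a square matrix whose row space is S.
   Linear maps act on row vectors by right multiplication.
   The tensor power (R^3)^{(x) n} is 'rV[R]_(3^n), with the Kronecker
   product [tensmx] (from mathcomp real_closed/mxtens.v). *)

Section Defs.
Variable R : realFieldType.

Definition dot3 (u v : 'rV[R]_3) : R := (u *m v^T) 0 0.

Definition perp (u : 'rV[R]_3) : 'M[R]_3 := kermx u^T.

Definition fsub (u v : 'rV[R]_3) : 'M[R]_3 :=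
  if dot3 u v == 0 then (perp u :&: perp v)%MS else perp u.

Definition oproj (S : 'M[R]_3) : 'M[R]_3 := proj_mx S (kermx S^T).

Fixpoint tens_seq (s : seq 'M[R]_3) : 'M[R]_(3 ^ size s) :=
  match s return 'M[R]_(3 ^ size s) with
  | [::] => castmx (esym (expn0 3), esym (expn0 3)) (1%:M : 'M[R]_1)
  | M :: s' => castmx (esym (expnS 3 (size s')), esym (expnS 3 (size s')))
                 (tensmx M (tens_seq s'))
  end.

Lemma size_map_enum_ord n (F : 'I_n -> 'M[R]_3) :
  size [seq F i | i <- enum 'I_n] = n.
Proof. by rewrite size_map size_enum_ord. Qed.

Definition tens_fam n (F : 'I_n -> 'M[R]_3) : 'M[R]_(3 ^ n) :=
  castmx (congr1 (expn 3) (size_map_enum_ord F),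
          congr1 (expn 3) (size_map_enum_ord F))
    (tens_seq [seq F i | i <- enum 'I_n]).

(* words of block length n: row i of x : 'M_(n,3) is the coordinate x_i *)
Definition coord n (x : 'M[R]_(n, 3)) (i : 'I_n) : 'rV[R]_3 := row i x.

Definition on_sphere n (x : 'M[R]_(n, 3)) : Prop :=
  forall i, dot3 (coord x i) (coord x i) = 1.

Definition mutually_orth (u v w : 'rV[R]_3) : Prop :=
  [/\ dot3 u v = 0, dot3 u w = 0 & dot3 v w = 0].

Definition vector_trifferent n (C : {fset 'M[R]_(n, 3)}) : Prop :=
  (forall x, x \in C -> on_sphere x) /\
  (forall x y z, x \in C -> y \in C -> z \in C ->
     x != y -> x != z -> y != z ->
     exists i, mutually_orth (coord x i) (coord y i) (coord z i)).

Definition Exy n (x y : 'M[R]_(n, 3)) : 'M[R]_(3 ^ n) :=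
  tens_fam (fun i => fsub (coord x i) (coord y i)).

Definition Pxy n (x y : 'M[R]_(n, 3)) : 'M[R]_(3 ^ n) :=
  tens_fam (fun i => oproj (fsub (coord x i) (coord y i))).

Definition strict_total_on (T : eqType) (A : pred T) (lt : rel T) : Prop :=
  [/\ (forall x, x \in A -> ~~ lt x x),
      (forall x y z, x \in A -> y \in A -> z \in A -> lt x y -> lt y z -> lt x z)
    & (forall x y, x \in A -> y \in A -> x != y -> lt x y || lt y x)].

End Defs.

(* Main.v *)
Require Import Defs.
From HB Require Import structures.
From mathcomp Require Import all_boot all_order all_algebra.
From mathcomp Require Import finmap.
From mathcomp Require Import mxtens.
Set Implicit Arguments. Unset Strict Implicit. Unset Printing Implicit Defensive.
Import Order.TTheory GRing.Theory Num.Theory.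
Local Open Scope ring_scope.

Section Tens.
Variable R : realFieldType.

Lemma castmx_irr m n m' n' (e e' : (m = m') * (n = n')) (A : 'M[R]_(m, n)) :
  castmx e A = castmx e' A.
Proof.
case: e e' => [a b] [c d].
by rewrite (eq_irrelevance a c) (eq_irrelevance b d).
Qed.

Lemma castmx_split k k' N (E : k = k') (e2 : k = N) (e1 : k' = N) (A : 'M[R]_k) :
  castmx (e2, e2) A = castmx (e1, e1) (castmx (E, E) A).
Proof. by rewrite castmx_comp; apply: castmx_irr. Qed.

Lemma cmul k N (e1 e2 e3 : k = N) (A B : 'M[R]_k) :
  castmx (e1, e1) A *m castmx (e2, e2) B = castmx (e3, e3) (A *m B).
Proof.
rewrite (eq_irrelevance e2 e1) (eq_irrelevance e3 e1).
by clear e2 e3; case: N / e1; rewrite !castmx_id.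
Qed.

Lemma castmx1 k N (e : k = N) : castmx (e, e) (1%:M : 'M[R]_k) = 1%:M.
Proof. by case: N / e; rewrite castmx_id. Qed.

Lemma castmx0 k N (e : k = N) : castmx (e, e) (0 : 'M[R]_k) = 0.
Proof. by case: N / e; rewrite castmx_id. Qed.

Lemma tens_castr n m m' (e : m = m') (A : 'M[R]_n) (B : 'M[R]_m) :
  A *t B = castmx (esym (congr1 (muln n) e), esym (congr1 (muln n) e))
              (A *t castmx (e, e) B).
Proof. by case: m' / e; rewrite !castmx_id. Qed.

Definition mulp (p : 'M[R]_3 * 'M[R]_3) := p.1 *m p.2.

Lemma szE (s : seq ('M[R]_3 * 'M[R]_3)) :
  (3 ^ size (unzip2 s) = 3 ^ size (unzip1 s))%N.
Proof. by rewrite !size_map. Qed.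
Lemma szE' (s : seq ('M[R]_3 * 'M[R]_3)) :
  (3 ^ size (map mulp s) = 3 ^ size (unzip1 s))%N.
Proof. by rewrite !size_map. Qed.

Lemma tens_seq_mul (s : seq ('M[R]_3 * 'M[R]_3)) e1 e2 :
  tens_seq (unzip1 s) *m castmx (e1, e1) (tens_seq (unzip2 s)) =
  castmx (e2, e2) (tens_seq (map mulp s)).
Proof.
elim: s e1 e2 => [|p s IH] e1 e2 /=.
  by rewrite (castmx1 (esym (expn0 3))) (castmx1 e1) (castmx1 e2) mulmx1.
rewrite (tens_castr (szE s) p.2).
rewrite ?castmx_comp.
rewrite (cmul _ _ (esym (expnS 3 (size (unzip1 s))))).
rewrite tensmx_mul (IH _ (szE' s)).
rewrite (tens_castr (szE' s) (mulp p)) ?castmx_comp.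
by apply: castmx_irr.
Qed.

Lemma tens_fam_mul n (F G : 'I_n -> 'M[R]_3) :
  tens_fam F *m tens_fam G = tens_fam (fun i => F i *m G i).
Proof.
rewrite /tens_fam.
pose s := [seq (F i, G i) | i <- enum 'I_n].
have gen : forall l1 l2 l3 N (e1 : (3 ^ size l1 = N)%N) (e2 : (3 ^ size l2 = N)%N)
   (e3 : (3 ^ size l3 = N)%N), l1 = unzip1 s -> l2 = unzip2 s -> l3 = map mulp s ->
   castmx (e1, e1) (tens_seq l1) *m castmx (e2, e2) (tens_seq l2) =
   castmx (e3, e3) (tens_seq l3).
  move=> l1 l2 l3 N e1 e2 e3 E1 E2 E3; subst l1 l2 l3.
  rewrite (castmx_split (szE s) e2 e1) (cmul e1 e1 e1) (tens_seq_mul _ (szE' s)).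
  by rewrite castmx_comp; apply: castmx_irr.
by apply: gen; rewrite /s -[RHS]map_comp.
Qed.

Lemma tens_fam_ext n (F G : 'I_n -> 'M[R]_3) : F =1 G -> tens_fam F = tens_fam G.
Proof.
move=> FG; rewrite /tens_fam.
have gen : forall (u1 u2 : seq 'M[R]_3) (K : nat) (e1 : (3 ^ size u1 = K)%N) (e2 : (3 ^ size u2 = K)%N),
  u1 = u2 -> castmx (e1, e1) (tens_seq u1) = castmx (e2, e2) (tens_seq u2).
  move=> u1 u2 K e1 e2 E; subst u2; apply: castmx_irr.
by apply: gen; apply: eq_map.
Qed.

Lemma tens_seq0 (s : seq 'M[R]_3) : 0 \in s -> tens_seq s = 0.
Proof.
elim: s => [|M s IH] //=; rewrite inE => /orP [/eqP <-|/IH ->].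
  by rewrite tens0mx castmx0.
by rewrite tensmx0 castmx0.
Qed.

Lemma tens_fam0 n (F : 'I_n -> 'M[R]_3) i : F i = 0 -> tens_fam F = 0.
Proof.
move=> Fi; rewrite /tens_fam tens_seq0 ?castmx0 //.
by rewrite -Fi; apply: map_f; rewrite mem_enum.
Qed.

End Tens.
Section Geo.
Variable R : realFieldType.
Implicit Types u v w z : 'rV[R]_3.

Lemma dot3E u v : dot3 u v = \sum_k u 0 k * v 0 k.
Proof. by rewrite /dot3 !mxE; apply: eq_bigr => k _; rewrite mxE. Qed.

Lemma dot3C u v : dot3 u v = dot3 v u.
Proof. by rewrite !dot3E; apply: eq_bigr => k _; rewrite mulrC. Qed.

Lemma dot3_self0 w : dot3 w w = 0 -> w = 0.
Proof.
rewrite dot3E => H; apply/rowP => k; rewrite mxE.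
have pos : forall i, predT i -> 0 <= w 0 i * w 0 i by move=> i _; rewrite -expr2 sqr_ge0.
have := psumr_eq0P pos H isT (i := k).
by move/eqP; rewrite mulf_eq0 orbb => /eqP.
Qed.

Lemma perpP w u : (w <= perp u)%MS = (dot3 w u == 0).
Proof.
rewrite /perp; apply/sub_kermxP/eqP => [H | H].
  by rewrite /dot3 H mxE.
by apply/matrixP => i j; rewrite !ord1 [RHS]mxE; exact: H.
Qed.

Lemma capK (S : 'M[R]_3) : (S :&: kermx S^T)%MS = 0.
Proof.
apply/eqP; rewrite -submx0; apply/rV_subP => v.
rewrite sub_capmx => /andP [/submxP [a ->] /sub_kermxP H].
suff -> : a *m S = 0 by rewrite sub0mx.
apply: dot3_self0.
by rewrite /dot3 trmx_mul mulmxA H mul0mx mxE.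
Qed.

Lemma oproj_id (S : 'M[R]_3) : S *m oproj S = S.
Proof. by rewrite /oproj proj_mx_id ?capK. Qed.

Lemma oproj_0 (S T : 'M[R]_3) : (forall i j, dot3 (row i T) (row j S) = 0) ->
  T *m oproj S = 0.
Proof.
move=> H; rewrite /oproj proj_mx_0 ?capK //.
apply/sub_kermxP/matrixP => i j; rewrite !mxE -[RHS](H i j) dot3E.
by apply: eq_bigr => k _; rewrite !mxE.
Qed.

Definition orthonormal u v w :=
  [/\ dot3 u u = 1, dot3 v v = 1, dot3 w w = 1 & mutually_orth u v w].

Lemma ortho_decomp u v w z : orthonormal u v w ->
  dot3 z u = 0 -> dot3 z v = 0 -> z = dot3 z w *: w.
Proof.
move=> [uu vv ww [uv uw vw]] zu zv.
pose g (i : 'I_3) := if (i : nat) == 0%N then u else if (i : nat) == 1%N then v else w.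
pose M := \matrix_(i < 3, j < 3) g i 0 j.
have dM i j : (M *m M^T) i j = dot3 (g i) (g j).
  by rewrite dot3E !mxE; apply: eq_bigr => k _; rewrite !mxE.
have MM : M *m M^T = 1%:M.
  apply/matrixP => i j; rewrite dM !mxE.
  case: i => [[|[|[|i]]]] //= Hi; case: j => [[|[|[|j]]]] //= Hj;
    rewrite /g /= ?uu ?vv ?ww ?uv ?uw ?vw ?(dot3C v u) ?(dot3C w u) ?(dot3C w v) ?uv ?uw ?vw //.
have MM' := mulmx1C MM.
have zE : z = z *m (M^T *m M) by rewrite MM' mulmx1.
apply/rowP => k; rewrite {1}zE mulmxA !mxE !big_ord_recr big_ord0 /= add0r.
have e i : (z *m M^T) 0 i = dot3 z (g i).
  by rewrite dot3E !mxE; apply: eq_bigr => l _; rewrite !mxE.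
rewrite !e !mxE /g /= zu zv !mul0r !add0r.
by [].
Qed.

End Geo.

Local Open Scope fset_scope.

Section Main.
Variable R : realFieldType.
Implicit Types u v w p q : 'rV[R]_3.

Lemma dot3Zl c u v : dot3 (c *: u) v = c * dot3 u v.
Proof. by rewrite /dot3 -scalemxAl mxE. Qed.

Lemma G3 t1 t2 t3 p q : orthonormal t1 t2 t3 ->
  dot3 p t1 = 0 -> dot3 p t2 = 0 -> dot3 q t3 = 0 -> dot3 p q = 0.
Proof.
move=> on p1 p2 q3; rewrite (ortho_decomp on p1 p2) dot3Zl (dot3C t3 q) q3.
by rewrite mulr0.
Qed.

Lemma fsub1 u v w : (w <= Defs.fsub u v)%MS -> dot3 w u = 0.
Proof.
rewrite /Defs.fsub; case: ifP => _; last by rewrite perpP => /eqP.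
by rewrite sub_capmx => /andP [] ; rewrite perpP => /eqP.
Qed.

Lemma fsub2 u v w : dot3 u v = 0 -> (w <= Defs.fsub u v)%MS -> dot3 w v = 0.
Proof.
move=> uv; rewrite /Defs.fsub uv eqxx sub_capmx => /andP [_].
by rewrite perpP => /eqP.
Qed.

Lemma tri_on n (C : {fset 'M[R]_(n, 3)}) x y z :
  vector_trifferent C -> x \in C -> y \in C -> z \in C ->
  x != y -> x != z -> y != z ->
  exists i, orthonormal (Defs.coord x i) (Defs.coord y i) (Defs.coord z i).
Proof.
move=> [sph tri] xC yC zC xy xz yz.
have [i Hi] := tri x y z xC yC zC xy xz yz.
by exists i; split => //; [exact: (sph _ xC i) | exact: (sph _ yC i) | exact: (sph _ zC i)].
Qed.

Lemma key n (C : {fset 'M[R]_(n, 3)}) x y a b :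
  vector_trifferent C -> x \in C -> y \in C -> a \in C -> b \in C ->
  x != y -> a != b -> (a, b) != (x, y) -> (a, b) != (y, x) ->
  exists i, forall r s,
    dot3 (row r (Defs.fsub (Defs.coord a i) (Defs.coord b i)))
         (row s (Defs.fsub (Defs.coord x i) (Defs.coord y i))) = 0.
Proof.
move=> VT xC yC aC bC xy ab nab nab'.
have pXY i r : dot3 (Defs.coord x i) (Defs.coord y i) = 0 ->
  dot3 (row r (Defs.fsub (Defs.coord x i) (Defs.coord y i))) (Defs.coord x i) = 0 /\
  dot3 (row r (Defs.fsub (Defs.coord x i) (Defs.coord y i))) (Defs.coord y i) = 0.
  by move=> H; split; [apply: fsub1 (row_sub _ _) | apply: fsub2 H (row_sub _ _)].
have [ax|ax] := eqVneq a x; last have [ay|ay] := eqVneq a y.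
- subst a.
  have yb : y != b by apply: contra nab => /eqP <-.
  have xb : x != b by [].
  have [i On] := tri_on VT xC yC bC xy xb yb.
  exists i => r s; rewrite dot3C.
  have [_ _ _ [o1 o2 o3]] := On.
  have [h1 h2] := pXY i s o1.
  exact: (G3 On h1 h2 (fsub2 o2 (row_sub _ _))).
- subst a.
  have xb : x != b by apply: contra nab' => /eqP <-.
  have yb : y != b by [].
  have [i On] := tri_on VT xC yC bC xy xb yb.
  exists i => r s; rewrite dot3C.
  have [_ _ _ [o1 o2 o3]] := On.
  have [h1 h2] := pXY i s o1.
  exact: (G3 On h1 h2 (fsub2 o3 (row_sub _ _))).
- have xa : x != a by rewrite eq_sym.
  have ya : y != a by rewrite eq_sym.
  have [i On] := tri_on VT xC yC aC xy xa ya.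
  exists i => r s; rewrite dot3C.
  have [_ _ _ [o1 o2 o3]] := On.
  have [h1 h2] := pXY i s o1.
  exact: (G3 On h1 h2 (fsub1 (row_sub _ _))).
Qed.

Lemma EP_same n (x y : 'M[R]_(n, 3)) : Exy x y *m Pxy x y = Exy x y.
Proof.
rewrite /Exy /Pxy tens_fam_mul; apply: tens_fam_ext => i.
exact: oproj_id.
Qed.

Lemma EP_diff n (C : {fset 'M[R]_(n, 3)}) x y a b :
  vector_trifferent C -> x \in C -> y \in C -> a \in C -> b \in C ->
  x != y -> a != b -> (a, b) != (x, y) -> (a, b) != (y, x) ->
  Exy a b *m Pxy x y = 0.
Proof.
move=> VT xC yC aC bC xy ab n1 n2.
have [i Hi] := key VT xC yC aC bC xy ab n1 n2.
rewrite /Exy /Pxy tens_fam_mul; apply: (@tens_fam0 _ _ _ i).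
exact: oproj_0.
Qed.

End Main.

Theorem mainTheorem6 (R : realFieldType) (n : nat)
  (C : {fset 'M[R]_(n, 3)}) (lt : rel 'M[R]_(n, 3)) :
  vector_trifferent C ->
  strict_total_on (mem C) lt ->
  (forall x y a b, x \in C -> y \in C -> a \in C -> b \in C ->
     lt x y -> lt a b ->
     (Exy a b *m Pxy x y ==
        (if (a, b) == (x, y) then Exy a b else 0 : 'M[R]_(3 ^ n)))%MS) /\
  mxdirect (\sum_(p : C * C | lt (val p.1) (val p.2))
              Exy (val p.1) (val p.2))%MS.
Proof.
move=> VT [irr trans tot].
have neq x y : x \in C -> lt x y -> x != y.
  by move=> xC lxy; apply/eqP => exy; move: (irr x xC); rewrite {2}exy lxy.
have diff x y a b : x \in C -> y \in C -> a \in C -> b \in C ->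
    lt x y -> lt a b -> (a, b) != (x, y) -> Exy a b *m Pxy x y = 0.
  move=> xC yC aC bC lxy lab nab.
  apply: (EP_diff VT xC yC aC bC (neq _ _ xC lxy) (neq _ _ aC lab) nab).
  apply/eqP => -[ay bx]; subst a b.
  by move: (irr x xC); rewrite (trans _ _ _ xC yC xC lxy lab).
split.
  move=> x y a b xC yC aC bC lxy lab.
  case: eqP => [[-> ->] | ne]; first by rewrite EP_same !submx_refl.
  by rewrite (diff x y a b) ?submx_refl //; apply/eqP.
apply/mxdirect_sumsP => p lp.
set M := (_ :&: _)%MS.
have M1 : M *m Pxy (val p.1) (val p.2) = M.
  have /submxP [D ->] : (M <= Exy (val p.1) (val p.2))%MS by apply: capmxSl.
  by rewrite -mulmxA EP_same.
have M0 : M *m Pxy (val p.1) (val p.2) = 0.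
  apply/sub_kermxP; apply: submx_trans (capmxSr _ _) _.
  apply/sumsmx_subP => q /andP [lq nq]; apply/sub_kermxP.
  have nqp : (val q.1, val q.2) != (val p.1, val p.2).
    apply: contra nq; rewrite xpair_eqE => /andP [/eqP/val_inj e1 /eqP/val_inj e2].
    by apply/eqP; rewrite [q]surjective_pairing [p]surjective_pairing e1 e2.
  exact: (diff _ _ _ _ (valP p.1) (valP p.2) (valP q.1) (valP q.2) lp lq nqp).
by rewrite -M1 M0.
Qed.
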